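(* Let $(\mathbf{x}_t,\mathbf{z}_t,\mathbf{y}_t)_{t\ge 0}$ be generated by generalized Bregman ADMM (defined in the context) with parameters $\rho>0$, $\tau>0$, $\rho_{\mathbf{x}}\ge 0$, $\rho_{\mathbf{z}}\ge 0$, under the standing assumptions. Then for every $t\ge 0$ and every $\mathbf{x}^*,\mathbf{z}^*$ with $\mathbf{A}\mathbf{x}^*+\mathbf{B}\mathbf{z}^*=\mathbf{c}$ (and with all Bregman divergences below well defined), \begin{align*} &f(\mathbf{x}_{t+1})+g(\mathbf{z}_{t+1})-\big(f(\mathbf{x}^* )+g(\mathbf{z}^* )\big)\\ &\le -\langle \mathbf{y}_t,\mathbf{A}\mathbf{x}_{t+1}+\mathbf{B}\mathbf{z}_{t+1}-\mathbf{c}\rangle-\rho\big(B_\phi(\mathbf{c}-\mathbf{A}\mathbf{x}_{t+1},\mathbf{B}\mathbf{z}_t)+B_\phi(\mathbf{B}\mathbf{z}_{t+1},\mathbf{c}-\mathbf{A}\mathbf{x}_{t+1})\big)\\ &\quad+\rho\big(B_\phi(\mathbf{B}\mathbf{z}^*,\mathbf{B}\mathbf{z}_t)-B_\phi(\mathbf{B}\mathbf{z}^*,\mathbf{B}\mathbf{z}_{t+1})\big)\\ &\quad+\rho_{\mathbf{x}}\big(B_{\varphi_{\mathbf{x}}}(\mathbf{x}^*,\mathbf{x}_t)-B_{\varphi_{\mathbf{x}}}(\mathbf{x}^*,\mathbf{x}_{t+1})-B_{\varphi_{\mathbf{x}}}(\mathbf{x}_{t+1},\mathbf{x}_t)\big)\\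 &\quad+\rho_{\mathbf{z}}\big(B_{\varphi_{\mathbf{z}}}(\mathbf{z}^*,\mathbf{z}_t)-B_{\varphi_{\mathbf{z}}}(\mathbf{z}^*,\mathbf{z}_{t+1})-B_{\varphi_{\mathbf{z}}}(\mathbf{z}_{t+1},\mathbf{z}_t)\big). \end{align*}
   Context: Problem: $f:\mathbb{R}^{n_1}\to\mathbb{R}\cup\{+\infty\}$ and $g:\mathbb{R}^{n_2}\to\mathbb{R}\cup\{+\infty\}$ are closed, proper, convex; $\mathbf{A}\in\mathbb{R}^{m\times n_1}$, $\mathbf{B}\in\mathbb{R}^{m\times n_2}$, $\mathbf{c}\in\mathbb{R}^m$; $\mathcal{X}\subseteq\mathbb{R}^{n_1}$, $\mathcal{Z}\subseteq\mathbb{R}^{n_2}$ convex; the problem is $\min f(\mathbf{x})+g(\mathbf{z})$ s.t. $\mathbf{x}\in\mathcal{X},\mathbf{z}\in\mathcal{Z},\mathbf{A}\mathbf{x}+\mathbf{B}\mathbf{z}=\mathbf{c}$. For a continuously differentiable, strictly convex function $\psi$ on (the relative interior of) a convex set, the Bregman divergence is $B_\psi(\mathbf{u},\mathbf{v})=\psi(\mathbf{u})-\psi(\mathbf{v})-\langle\nabla\psi(\mathbf{v}),\mathbf{u}-\mathbf{v}\rangle\ge 0$. Three such functions are fixed: $\phi$ (on a convex subset of $\mathbb{R}^m$), $\varphi_{\mathbf{x}}$ (on $\mathbb{R}^{n_1}$ or a convex subset), $\varphi_{\mathbf{z}}$ (on $\mathbb{R}^{n_2}$ or a convex subset). Generalized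 Bregman ADMM: given $(\mathbf{x}_0,\mathbf{z}_0,\mathbf{y}_0)$ and parameters $\rho>0,\tau>0,\rho_{\mathbf{x}}\ge0,\rho_{\mathbf{z}}\ge0$, for $t\ge0$: $\mathbf{x}_{t+1}=\arg\min_{\mathbf{x}\in\mathcal{X}} f(\mathbf{x})+\langle\mathbf{y}_t,\mathbf{A}\mathbf{x}+\mathbf{B}\mathbf{z}_t-\mathbf{c}\rangle+\rho B_\phi(\mathbf{c}-\mathbf{A}\mathbf{x},\mathbf{B}\mathbf{z}_t)+\rho_{\mathbf{x}}B_{\varphi_{\mathbf{x}}}(\mathbf{x},\mathbf{x}_t)$; $\mathbf{z}_{t+1}=\arg\min_{\mathbf{z}\in\mathcal{Z}} g(\mathbf{z})+\langle\mathbf{y}_t,\mathbf{A}\mathbf{x}_{t+1}+\mathbf{B}\mathbf{z}-\mathbf{c}\rangle+\rho B_\phi(\mathbf{B}\mathbf{z},\mathbf{c}-\mathbf{A}\mathbf{x}_{t+1})+\rho_{\mathbf{z}}B_{\varphi_{\mathbf{z}}}(\mathbf{z},\mathbf{z}_t)$; $\mathbf{y}_{t+1}=\mathbf{y}_t+\tau(\mathbf{A}\mathbf{x}_{t+1}+\mathbf{B}\mathbf{z}_{t+1}-\mathbf{c})$. Standing assumptions: the minimizers exist; all Bregman divergences are evaluated at points where they are defined (second arguments where the generating function is differentiable); and the minimizers satisfy the first-order optimality conditions $-\mathbf{A}^T\{\mathbf{y}_t+\rho(\nabla\phi(\mathbf{B}\mathbf{z}_t)-\nabla\phi(\mathbf{c}-\mathbf{A}\mathbf{x}_{t+1}))\}-\rho_{\mathbf{x}}(\nabla\varphi_{\mathbf{x}}(\mathbf{x}_{t+1})-\nabla\varphi_{\mathbf{x}}(\mathbf{x}_t))\in\partial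 f(\mathbf{x}_{t+1})$ and $-\mathbf{B}^T\{\mathbf{y}_t+\rho(\nabla\phi(\mathbf{B}\mathbf{z}_{t+1})-\nabla\phi(\mathbf{c}-\mathbf{A}\mathbf{x}_{t+1}))\}-\rho_{\mathbf{z}}(\nabla\varphi_{\mathbf{z}}(\mathbf{z}_{t+1})-\nabla\varphi_{\mathbf{z}}(\mathbf{z}_t))\in\partial g(\mathbf{z}_{t+1})$ (e.g. the set constraints are absorbed into $f,g$ as indicator functions). *)

(* Defs.v *)
From Stdlib Require Import Reals.
From mathcomp Require Import ssreflect ssrfun ssrbool eqtype ssrnat seq choice fintype bigop.
Set Implicit Arguments. Unset Strict Implicit. Unset Printing Implicit Defensive.

Local Open Scope R_scope.

Definition vec (n : nat) := 'I_n -> R.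
Definition mat (m n : nat) := 'I_m -> 'I_n -> R.

Definition dot n (u v : vec n) : R := \big[Rplus/0]_(i < n) (u i * v i).
Definition vadd n (u v : vec n) : vec n := fun i => u i + v i.
Definition vsub n (u v : vec n) : vec n := fun i => u i - v i.
Definition vopp n (u : vec n) : vec n := fun i => - u i.
Definition vscale n (a : R) (u : vec n) : vec n := fun i => a * u i.
Definition vnorm n (u : vec n) : R := sqrt (dot u u).

Definition mulmv m n (A : mat m n) (x : vec n) : vec m :=
  fun i => \big[Rplus/0]_(j < n) (A i j * x j).
Definition mulmtv m n (A : mat m n) (y : vec m) : vec n :=
  fun j => \big[Rplus/0]_(i < m) (A i j * y i).

Definition convex_set n (C : vec n -> Prop) : Prop :=
  forall u v (l : R), C u -> C v -> 0 <= l <= 1 ->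
    C (vadd (vscale l u) (vscale (1 - l) v)).

(* f is +infinity outside the domain predicate D; convexity of the extended
   function = convex domain + convexity on the domain. *)
Definition convex_on n (C : vec n -> Prop) (f : vec n -> R) : Prop :=
  convex_set C /\
  forall u v (l : R), C u -> C v -> 0 <= l <= 1 ->
    f (vadd (vscale l u) (vscale (1 - l) v)) <= l * f u + (1 - l) * f v.

Definition strictly_convex_on n (C : vec n -> Prop) (f : vec n -> R) : Prop :=
  convex_set C /\
  forall u v (l : R), C u -> C v -> (exists i, u i <> v i) -> 0 < l < 1 ->
    f (vadd (vscale l u) (vscale (1 - l) v)) < l * f u + (1 - l) * f v.

Definition vconv n (u : nat -> vec n) (x : vec n) : Prop :=
  forall eps, 0 < eps -> exists N, forall k, (N <= k)%nat -> vnorm (vsub (u k) x) < eps.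

(* closed = closed epigraph (lower semicontinuity of the extended function) *)
Definition closed_fun n (D : vec n -> Prop) (f : vec n -> R) : Prop :=
  forall (u : nat -> vec n) (x : vec n) (a : R),
    (forall k, D (u k)) -> vconv u x -> (forall k, f (u k) <= a) -> D x /\ f x <= a.

Definition proper_fun n (D : vec n -> Prop) : Prop := exists x, D x.

Definition ccp_fun n (D : vec n -> Prop) (f : vec n -> R) : Prop :=
  convex_on D f /\ proper_fun D /\ closed_fun D f.

Definition subgrad n (D : vec n -> Prop) (f : vec n -> R) (x s : vec n) : Prop :=
  D x /\ forall u, D u -> f x + dot s (vsub u x) <= f u.

Definition has_grad_at n (C : vec n -> Prop) (psi : vec n -> R) (gv v : vec n) : Prop :=
  forall eps, 0 < eps -> exists delta, 0 < delta /\
    forall w, C w -> vnorm (vsub w v) < delta ->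
      Rabs (psi w - psi v - dot gv (vsub w v)) <= eps * vnorm (vsub w v).

Definition cont_on n (D : vec n -> Prop) (g : vec n -> vec n) : Prop :=
  forall v, D v -> forall eps, 0 < eps -> exists delta, 0 < delta /\
    forall w, D w -> vnorm (vsub w v) < delta -> vnorm (vsub (g w) (g v)) < eps.

(* psi is defined on the convex set C; D (contained in C, convex) is the set
   (e.g. relative interior of C) on which psi is continuously differentiable
   with gradient gpsi and strictly convex. *)
Definition bregman_gen n (C D : vec n -> Prop) (psi : vec n -> R) (gpsi : vec n -> vec n) : Prop :=
  convex_set C /\ (forall v, D v -> C v) /\ convex_set D /\
  strictly_convex_on D psi /\
  (forall v, D v -> has_grad_at C psi (gpsi v) v) /\
  cont_on D gpsi.

Definition breg n (psi : vec n -> R) (gpsi : vec n -> vec n) (u v : vec n) : R :=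
  psi u - psi v - dot (gpsi v) (vsub u v).

(* Main.v *)
Require Import Defs.
From HB Require Import structures.
From Stdlib Require Import Reals Lra FunctionalExtensionality.
From mathcomp Require Import ssreflect ssrfun ssrbool eqtype ssrnat seq choice fintype bigop.
Local Open Scope R_scope.
HB.instance Definition _ := Monoid.isComLaw.Build R 0 Rplus (fun a b c => esym (Rplus_assoc a b c)) Rplus_comm Rplus_0_l.
Lemma sumD n (F G : 'I_n -> R) : \big[Rplus/0]_(i<n) (F i + G i) = \big[Rplus/0]_(i<n) F i + \big[Rplus/0]_(i<n) G i.
Proof. exact: big_split. Qed.
Lemma sumZ n a (F : 'I_n -> R) : \big[Rplus/0]_(i<n) (a * F i) = a * \big[Rplus/0]_(i<n) F i.
Proof. elim: n F => [|n IH] F; first by rewrite !big_ord0 /=; ring.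
rewrite !big_ord_recr /= IH; by rewrite Rmult_plus_distr_l. Qed.
Lemma dot_lin_r n (u v w : vec n) a b : dot u (fun i => a * v i + b * w i) = a * dot u v + b * dot u w.
Proof. rewrite /dot -!sumZ -sumD; apply: eq_bigr => i _ /=; ring. Qed.
Lemma dot_lin_l n (u v w : vec n) a b : dot (fun i => a * v i + b * w i) u = a * dot v u + b * dot w u.
Proof. rewrite /dot -!sumZ -sumD; apply: eq_bigr => i _ /=; ring. Qed.
Lemma dot_subr n (u v w : vec n) : dot u (vsub v w) = dot u v - dot u w.
Proof. rewrite -[vsub v w]/(fun i => v i - w i). have -> : (fun i => v i - w i) = (fun i => 1 * v i + (-1) * w i) by apply: functional_extensionality => i; ring.
rewrite dot_lin_r; ring. Qed.
Lemma dot_subl n (u v w : vec n) : dot (vsub v w) u = dot v u - dot w u.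
Proof. have -> : vsub v w = (fun i => 1 * v i + (-1) * w i) by apply: functional_extensionality => i; rewrite /vsub; ring.
rewrite dot_lin_l; ring. Qed.
Lemma dot_addl n (u v w : vec n) : dot (vadd v w) u = dot v u + dot w u.
Proof. have -> : vadd v w = (fun i => 1 * v i + 1 * w i) by apply: functional_extensionality => i; rewrite /vadd; ring.
rewrite dot_lin_l; ring. Qed.
Lemma dot_scalel n (u v : vec n) a : dot (vscale a v) u = a * dot v u.
Proof. have -> : vscale a v = (fun i => a * v i + 0 * v i) by apply: functional_extensionality => i; rewrite /vscale; ring.
rewrite dot_lin_l; ring. Qed.
Lemma dot_oppl n (u v : vec n) : dot (vopp v) u = - dot v u.
Proof. have -> : vopp v = (fun i => (-1) * v i + 0 * v i) by apply: functional_extensionality => i; rewrite /vopp; ring.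
rewrite dot_lin_l; ring. Qed.
Lemma dot_mulmtv m n (A : mat m n) y v : dot (mulmtv A y) v = dot y (mulmv A v).
Proof. rewrite /dot /mulmtv /mulmv.
transitivity (\big[Rplus/0]_(j<n) \big[Rplus/0]_(i<m) (y i * (A i j * v j))).
  apply: eq_bigr => j _. rewrite Rmult_comm -sumZ; apply: eq_bigr => i _; ring.
rewrite exchange_big /=; apply: eq_bigr => i _. rewrite -sumZ; apply: eq_bigr => j _; ring. Qed.
Lemma dot_addr n (u v w : vec n) : dot u (vadd v w) = dot u v + dot u w.
Proof. have -> : vadd v w = (fun i => 1 * v i + 1 * w i) by apply: functional_extensionality => i; rewrite /vadd; ring.
rewrite dot_lin_r; ring. Qed.
Lemma mulmv_sub m n (A : mat m n) u v : mulmv A (vsub u v) = vsub (mulmv A u) (mulmv A v).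
Proof. apply: functional_extensionality => i; rewrite /mulmv /vsub.
have -> : \big[Rplus/0]_(j < n) (A i j * (u j - v j)) = \big[Rplus/0]_(j < n) (A i j * u j + (-1) * (A i j * v j)).
  by apply: eq_bigr => j _; ring.
rewrite sumD sumZ; ring. Qed.
Theorem lemma1
  (n1 n2 m : nat)
  (f : vec n1 -> R) (Df : vec n1 -> Prop)
  (g : vec n2 -> R) (Dg : vec n2 -> Prop)
  (A : mat m n1) (B : mat m n2) (c : vec m)
  (X : vec n1 -> Prop) (Z : vec n2 -> Prop)
  (phi : vec m -> R) (gphi : vec m -> vec m) (Cphi Dphi : vec m -> Prop)
  (phx : vec n1 -> R) (gphx : vec n1 -> vec n1) (Cphx Dphx : vec n1 -> Prop)
  (phz : vec n2 -> R) (gphz : vec n2 -> vec n2) (Cphz Dphz : vec n2 -> Prop)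
  (rho tau rhox rhoz : R)
  (x : nat -> vec n1) (z : nat -> vec n2) (y : nat -> vec m)
  (Hf : ccp_fun Df f) (Hg : ccp_fun Dg g)
  (HX : convex_set X) (HZ : convex_set Z)
  (Hphi : bregman_gen Cphi Dphi phi gphi)
  (Hphx : bregman_gen Cphx Dphx phx gphx)
  (Hphz : bregman_gen Cphz Dphz phz gphz)
  (Hrho : 0 < rho) (Htau : 0 < tau) (Hrhox : 0 <= rhox) (Hrhoz : 0 <= rhoz)
  (* Bregman divergences in the iteration are well defined *)
  (Hdx : forall t, Dphx (x t)) (Hdz : forall t, Dphz (z t))
  (HdBz : forall t, Dphi (mulmv B (z t)))
  (HdAx : forall t, Dphi (vsub c (mulmv A (x t.+1))))
  (* x-update: x_{t+1} is a minimizer *)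
  (Hxmin : forall t,
     X (x t.+1) /\ Df (x t.+1) /\
     forall u, X u -> Df u -> Cphi (vsub c (mulmv A u)) -> Cphx u ->
       f (x t.+1) + dot (y t) (vsub (vadd (mulmv A (x t.+1)) (mulmv B (z t))) c)
         + rho * breg phi gphi (vsub c (mulmv A (x t.+1))) (mulmv B (z t))
         + rhox * breg phx gphx (x t.+1) (x t)
       <= f u + dot (y t) (vsub (vadd (mulmv A u) (mulmv B (z t))) c)
         + rho * breg phi gphi (vsub c (mulmv A u)) (mulmv B (z t))
         + rhox * breg phx gphx u (x t))
  (* z-update: z_{t+1} is a minimizer *)
  (Hzmin : forall t,
     Z (z t.+1) /\ Dg (z t.+1) /\
     forall u, Z u -> Dg u -> Cphi (mulmv B u) -> Cphz u ->
       g (z t.+1) + dot (y t) (vsub (vadd (mulmv A (x t.+1)) (mulmv B (z t.+1))) c)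
         + rho * breg phi gphi (mulmv B (z t.+1)) (vsub c (mulmv A (x t.+1)))
         + rhoz * breg phz gphz (z t.+1) (z t)
       <= g u + dot (y t) (vsub (vadd (mulmv A (x t.+1)) (mulmv B u)) c)
         + rho * breg phi gphi (mulmv B u) (vsub c (mulmv A (x t.+1)))
         + rhoz * breg phz gphz u (z t))
  (* y-update *)
  (Hy : forall t i, y t.+1 i =
     y t i + tau * (mulmv A (x t.+1) i + mulmv B (z t.+1) i - c i))
  (* first-order optimality conditions *)
  (Hxopt : forall t, subgrad Df f (x t.+1)
     (vsub (vopp (mulmtv A (vadd (y t)
              (vscale rho (vsub (gphi (mulmv B (z t))) (gphi (vsub c (mulmv A (x t.+1)))))))))
           (vscale rhox (vsub (gphx (x t.+1)) (gphx (x t))))))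
  (Hzopt : forall t, subgrad Dg g (z t.+1)
     (vsub (vopp (mulmtv B (vadd (y t)
              (vscale rho (vsub (gphi (mulmv B (z t.+1))) (gphi (vsub c (mulmv A (x t.+1)))))))))
           (vscale rhoz (vsub (gphz (z t.+1)) (gphz (z t))))))
  :
  forall (t : nat) (xs : vec n1) (zs : vec n2),
    (forall i, mulmv A xs i + mulmv B zs i = c i) ->
    Df xs -> Dg zs ->
    Cphx xs -> Cphz zs -> Cphi (mulmv B zs) ->
    f (x t.+1) + g (z t.+1) - (f xs + g zs)
    <= - dot (y t) (vsub (vadd (mulmv A (x t.+1)) (mulmv B (z t.+1))) c)
       - rho * (breg phi gphi (vsub c (mulmv A (x t.+1))) (mulmv B (z t))
                + breg phi gphi (mulmv B (z t.+1)) (vsub c (mulmv A (x t.+1))))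
       + rho * (breg phi gphi (mulmv B zs) (mulmv B (z t))
                - breg phi gphi (mulmv B zs) (mulmv B (z t.+1)))
       + rhox * (breg phx gphx xs (x t) - breg phx gphx xs (x t.+1)
                 - breg phx gphx (x t.+1) (x t))
       + rhoz * (breg phz gphz zs (z t) - breg phz gphz zs (z t.+1)
                 - breg phz gphz (z t.+1) (z t)).
Proof.
Proof.
move=> t xs zs Hc Dxs Dzs _ _ _.
have [_ Hsx] := Hxopt t; have Ix := Hsx xs Dxs.
have [_ Hsz] := Hzopt t; have Iz := Hsz zs Dzs.
have HA : mulmv A xs = vsub c (mulmv B zs).
  by apply: functional_extensionality => i; rewrite /vsub -(Hc i); ring.
move: Ix Iz; rewrite /breg !(dot_subl, dot_subr, dot_addl, dot_addr, dot_oppl, dot_scalel, dot_mulmtv).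

rewrite HA !(dot_subl, dot_subr, dot_addl, dot_addr, dot_oppl, dot_scalel, dot_mulmtv).
move=> Ix Iz.
lra.
Qed.
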